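(* If $s\ge3$ and $s$ is odd, then $\mathrm{ex}(n,P^{(3)}_s)\ge\left(1-\frac{4}{(s-1)^2}+o(1)\right)\binom{n}{3}$, where $o(1)\to0$ as $n\to\infty$ with $s$ fixed.
   Context: An ordered $3$-uniform hypergraph is a $3$-uniform hypergraph with linearly ordered vertex set; $G$ contains $H$ if there is an order-preserving injection $f:V(H)\to V(G)$ with $f(e)\in E(G)$ for all $e\in E(H)$. $\mathrm{ex}(n,H)$ is the maximum number of edges of an $n$-vertex ordered $3$-uniform hypergraph not containing $H$. $P^{(3)}_s$ has vertices $v_1<\dots<v_s$ and edges $\{v_j,v_{j+1},v_{j+2}\}$ for $1\le j\le s-2$. *)

(* Defs.v *)
From mathcomp Require Import all_boot all_order all_algebra.
Set Implicit Arguments. Unset Strict Implicit. Unset Printing Implicit Defensive.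
Import Order.TTheory GRing.Theory Num.Theory.

Definition uniform3 (n : nat) (G : {set {set 'I_n}}) : bool :=
  [forall e in G, #|e| == 3].

(* G contains H: an order-preserving injection f : V(H) -> V(G)
   (i.e. strictly increasing map) sending every edge of H to an edge of G. *)
Definition contains (n m : nat) (G : {set {set 'I_n}}) (H : {set {set 'I_m}}) : bool :=
  [exists f : {ffun 'I_m -> 'I_n},
     [forall i : 'I_m, forall j : 'I_m, (i < j)%N ==> (f i < f j)%N] &&
     [forall e in H, (f @: e) \in G]].

Definition ex (n m : nat) (H : {set {set 'I_m}}) : nat :=
  \max_(G : {set {set 'I_n}} | uniform3 G && ~~ contains G H) #|G|.

(* The tight path P^(3)_s: vertices v_1 < ... < v_s (here 0 < ... < s-1),
   edges {v_j, v_{j+1}, v_{j+2}}. *)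
Definition tight_path (s : nat) : {set {set 'I_s}} :=
  [set e : {set 'I_s} | [exists j : 'I_s, ((j.+2 < s)%N) &&
      (e == [set i : 'I_s | (j <= i <= j.+2)%N])]].

(* Main.v *)
Require Import Defs.
From mathcomp Require Import all_boot all_order all_algebra.
From mathcomp Require Import zify ring lra.
Import Order.TTheory GRing.Theory Num.Theory.

Lemma C3 x : 'C(x,3) * 6 = x * x.-1 * x.-2.
Proof. by rewrite -[6]/(3`!) bin_ffact !ffactnS ffactn0 muln1 mulnA. Qed.

Lemma card_bigcup_le (T : finType) k (F : 'I_k -> {set T}) :
  #|\bigcup_(b < k) F b| <= \sum_(b < k) #|F b|.
Proof.
elim: k F => [|k IH] F; first by rewrite !big_ord0 cards0.
rewrite !big_ord_recr /=; apply: leq_trans (leq_card_setU _ _) _.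
by rewrite leq_add2r; apply: IH.
Qed.

Lemma construct k n : exists G : {set {set 'I_n}},
  [/\ uniform3 G, ~~ contains G (tight_path (k.+1).*2.+1) &
      (k.+1)^2 * 'C(n,3) <= (k.+1)^2 * #|G| + 'C(n,3)].
Proof.
pose q := n.-1 %/ k.+1. pose m := q.+1.
have hq : n.-1 = q * k.+1 + n.-1 %% k.+1 := divn_eq _ _.
have hr : n.-1 %% k.+1 < k.+1 := ltn_pmod _ (ltn0Sn _).
have blt : forall i : 'I_n, i %/ m < k.+1.
  move=> i; rewrite ltn_divLR // ; have := ltn_ord i; rewrite /m; nia.
pose blk (i : 'I_n) : 'I_k.+1 := inord (i %/ m).
have blkE : forall i, nat_of_ord (blk i) = i %/ m by move=> i; rewrite /blk inordK.
pose mono (e : {set 'I_n}) := [forall x in e, forall y in e, blk x == blk y].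
pose T3 := [set e : {set 'I_n} | #|e| == 3].
pose Mo := [set e | mono e].
exists (T3 :\: Mo); split.
- apply/forallP => e; apply/implyP; rewrite inE => /andP[_]; by rewrite inE.
- rewrite /contains; apply/negP => /existsP[f /andP[/forallP finc /forallP fG]].
  set s := (k.+1).*2.+1.
  have fmono : forall i j : 'I_s, (i <= j)%N -> (f i <= f j)%N.
    move=> i j; rewrite leq_eqVlt => /orP[/eqP hij|hij].
      by rewrite (val_inj hij).
    by apply: ltnW; move: (finc i) => /forallP/(_ j)/implyP/(_ hij).
  have key : forall t, t.*2 < s -> t <= f (inord t.*2) %/ m.
    elim=> [|t IH] hlt; first by [].
    have hlt' : t.*2 < s by rewrite doubleS in hlt; lia.
    have IH' := IH hlt'.
    set j : 'I_s := inord t.*2.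
    have jE : nat_of_ord j = t.*2 by rewrite /j inordK.
    have j2E : nat_of_ord (inord t.+1.*2 : 'I_s) = j.+2.
      by rewrite inordK // jE doubleS.
    have Ein : [set i : 'I_s | (j <= i <= j.+2)%N] \in tight_path s.
      rewrite inE; apply/existsP; exists j; rewrite eqxx andbT jE.
      by rewrite doubleS in hlt.
    move: (fG [set i : 'I_s | (j <= i <= j.+2)%N]) => /implyP/(_ Ein).
    rewrite inE => /andP[hnm _].
    suff : f j %/ m < f (inord t.+1.*2) %/ m by lia.
    rewrite ltnNge; apply: contra hnm => hle.
    have sand : forall i, i \in [set i : 'I_s | (j <= i <= j.+2)%N] ->
        f i %/ m = f j %/ m.
      move=> i; rewrite inE => /andP[h1 h2]; apply/eqP; rewrite eqn_leq.
      apply/andP; split; last by apply: leq_div2r; apply: fmono.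
      apply: leq_trans hle; apply: leq_div2r; apply: fmono; by rewrite j2E.
    rewrite inE; apply/forallP => x; apply/implyP => /imsetP[i iE ->].
    apply/forallP => y; apply/implyP => /imsetP[i' i'E ->].
    by apply/eqP/val_inj; rewrite /= !blkE (sand _ iE) (sand _ i'E).
  have := key k.+1 (ltnSn _).
  by rewrite leqNgt blt.
- have hT3 : #|T3| = 'C(n,3) by rewrite card_draws card_ord.
  have hsplit := cardsID Mo T3.
  pose Bl (b : 'I_k.+1) := [set i | blk i == b].
  have sub : T3 :&: Mo \subset
      \bigcup_(b < k.+1) [set A : {set 'I_n} | A \subset Bl b & #|A| == 3].
    apply/subsetP => e; rewrite !inE => /andP[e3 me].
    have [x xe] : exists x, x \in e.
      by apply/set0Pn; rewrite -card_gt0 (eqP e3).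
    apply/bigcupP; exists (blk x) => //; rewrite inE e3 andbT.
    apply/subsetP => y ye; rewrite inE.
    by move: me => /forallP/(_ y)/implyP/(_ ye)/forallP/(_ x)/implyP/(_ xe).
  have hM1 := leq_trans (subset_leq_card sub) (card_bigcup_le _ _ _).
  rewrite (eq_bigr (fun b => 'C(#|Bl b|, 3))) in hM1; last by move=> b _; rewrite cards_draws.
  have Bsz : forall b, #|Bl b| <= m.
    move=> b.
    pose g (i : 'I_n) : 'I_m := Ordinal (ltn_pmod i (ltn0Sn q)).
    rewrite -(card_in_imset (f := g)); last first.
      move=> i j; rewrite !inE => /eqP bi /eqP bj /(congr1 val) /= hij.
      apply: val_inj => /=.
      have hi : i %/ m = b by rewrite -blkE bi.
      have hj : j %/ m = b by rewrite -blkE bj.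
      by rewrite (divn_eq i m) (divn_eq j m) hi hj hij.
    by rewrite -[X in _ <= X]card_ord max_card.
  have Bsum : \sum_(b < k.+1) #|Bl b| = n.
    under eq_bigr do rewrite -sum1_card big_mkcond /=.
    rewrite exchange_big /=.
    rewrite -[RHS]card_ord -sum1_card; apply: eq_bigr => i _.
    rewrite -big_mkcond /=.
    rewrite (big_pred1 (blk i)) // => b; rewrite inE /= eq_sym.
    by [].
  have hM2 : (\sum_(b < k.+1) 'C(#|Bl b|, 3)) * 6 <= n * q * q.-1.
    rewrite big_distrl /=.
    apply: (@leq_trans (\sum_(b < k.+1) #|Bl b| * (q * q.-1))).
      apply: leq_sum => b _; rewrite C3 -mulnA leq_mul2l.
      have := Bsz b; rewrite /m.
      case: #|Bl b| => [|[|x]] //= hb.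
      by apply: leq_mul; lia.
    by rewrite -big_distrl /= Bsum mulnA.
  have h1 : k.+1 * q <= n.-1 by lia.
  have h2 : k.+1 * q.-1 <= n.-2 by nia.
  have hM : #|T3 :&: Mo| * 6 * (k.+1)^2 <= 'C(n,3) * 6.
    rewrite C3.
    apply: (@leq_trans (n * (k.+1 * q) * (k.+1 * q.-1))); last first.
      by apply: leq_mul; [apply: leq_mul|].
    apply: (@leq_trans (n * q * q.-1 * (k.+1)^2)).
      by rewrite leq_mul2r; apply/orP; right; apply: leq_trans hM2; rewrite leq_mul2r hM1 orbT.
    rewrite expnS expn1; nia.
  have hMK : #|T3 :&: Mo| * (k.+1)^2 <= 'C(n,3).
    by rewrite -(leq_pmul2r (isT : 0 < 6)) mulnAC.
  rewrite -{1}hT3 -hsplit mulnDr addnC leq_add2l mulnC; exact: hMK.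
Qed.

Local Open Scope ring_scope.

Theorem corollary4p3 (s : nat) :
  (3 <= s)%N -> odd s ->
  forall eps : rat, 0 < eps ->
  exists N : nat, forall n : nat, (N <= n)%N ->
    (1 - 4 / ((s.-1)%:R ^+ 2) - eps) * ('C(n, 3))%:R <= (ex n (tight_path s))%:R.
Proof.
move=> h3 hodd eps heps.
have [k hs] : exists k, s = (k.+1).*2.+1.
  exists (s./2).-1; have := odd_double_half s; rewrite hodd /=; lia.
subst s; exists 0%N => n _.
have [G [hu hc hcnt]] := construct k n.
have hex : (#|G| <= ex n (tight_path (k.+1).*2.+1))%N.
  by rewrite /ex; apply: leq_bigmax_cond; rewrite hu hc.
apply: (le_trans _ (_ : #|G|%:R <= _)); last by rewrite ler_nat.
rewrite /= -mul2n natrM.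
set K : rat := (k.+1)%:R.
have Kpos : 0 < K by rewrite ltr0n.
have -> : 4 / (2%:R * K) ^+ 2 = (K ^+ 2)^-1.
  by field; rewrite nat1r pnatr_eq0.
have hc' : K ^+ 2 * 'C(n, 3)%:R <= K ^+ 2 * #|G|%:R + 'C(n, 3)%:R.
  by rewrite /K -natrX -!natrM -natrD ler_nat.
set C : rat := 'C(n, 3)%:R in hc' *.
set Gr : rat := #|G|%:R in hc' *.
have C0 : 0 <= C by rewrite ler0n.
have K2 : 0 < K ^+ 2 by rewrite exprn_gt0.
apply: (le_trans (_ : _ <= (1 - (K ^+ 2)^-1) * C)).
  by rewrite ler_wpM2r // lerBlDr lerDl ltW.
rewrite -(ler_pM2l K2) mulrA mulrBr mulr1 mulrV ?unitfE ?lt0r_neq0 //.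
lra.
Qed.
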